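(* Let $A\subseteq B$ be an extension of commutative rings such that $B$ has only finitely many maximal ideals. Then the canonical map $\mathfrak{C}(A,B)\to\operatorname{Pic}(A)$, sending the class of an invertible ideal $L$ to $[L]$, is an isomorphism of groups.
   Context: For an extension of rings $A\subseteq B$ and $A$-submodules $L,L'$ of $B$, $LL'$ is the $A$-submodule of finite sums $\sum x_ky_k$. An $A$-submodule $L$ of $B$ is an invertible ideal of $A\subseteq B$ if $LL'=A$ for some $A$-submodule $L'$ of $B$; these form an abelian group $\mathscr{G}(A,B)$ and $\mathfrak{C}(A,B)=\mathscr{G}(A,B)/\{Ax:x\in B^\ast\}$. $\operatorname{Pic}(A)$ is the group of isomorphism classes of finitely generated projective $A$-modules of constant rank $1$ under $\otimes_A$; invertible ideals are such modules. *)

(* Defs.v *)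
From HB Require Import structures.
From mathcomp Require Import all_boot all_order all_algebra.
Set Implicit Arguments. Unset Strict Implicit. Unset Printing Implicit Defensive.
Import GRing.Theory.
Local Open Scope ring_scope.

Definition is_ideal (R : comPzRingType) (I : R -> Prop) : Prop :=
  I 0 /\ (forall x y, I x -> I y -> I (x + y)) /\ (forall r x, I x -> I (r * x)).

Definition is_prime_ideal (R : comPzRingType) (I : R -> Prop) : Prop :=
  is_ideal I /\ ~ I 1 /\ (forall x y, I (x * y) -> I x \/ I y).

Definition is_maximal_ideal (R : comPzRingType) (I : R -> Prop) : Prop :=
  is_ideal I /\ ~ I 1 /\
  (forall J : R -> Prop, is_ideal J -> ~ J 1 -> (forall x, I x -> J x) ->
     forall x, J x -> I x).

Definition finitely_many_maximal_ideals (R : comPzRingType) : Prop :=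
  exists n (Ms : 'I_n -> R -> Prop),
    forall I : R -> Prop, is_maximal_ideal I -> exists i, forall x, I x <-> Ms i x.

Section Ext.
Variables (A B : comPzRingType) (f : {rmorphism A -> B}).

Definition Asubmod (L : B -> Prop) : Prop :=
  L 0 /\ (forall x y, L x -> L y -> L (x + y)) /\ (forall a x, L x -> L (f a * x)).

Definition subprod (L L' : B -> Prop) (z : B) : Prop :=
  exists n (xs ys : 'I_n -> B),
    (forall i, L (xs i) /\ L' (ys i)) /\ z = \sum_(i < n) xs i * ys i.

Definition Aimg (z : B) : Prop := exists a, z = f a.

Definition eqsub (L L' : B -> Prop) : Prop := forall z, L z <-> L' z.

Definition invertible (L : B -> Prop) : Prop :=
  Asubmod L /\ exists L', Asubmod L' /\ eqsub (subprod L L') Aimg.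

Definition unitB (x : B) : Prop := exists y, x * y = 1.

Definition principal (x : B) (z : B) : Prop := exists a, z = f a * x.

(* equality of classes in C(A,B) = G(A,B) / {Ax : x in B^*} *)
Definition same_class (L L' : B -> Prop) : Prop :=
  exists x, unitB x /\ eqsub L' (subprod L (principal x)).

Definition submod_iso (L L' : B -> Prop) : Prop :=
  exists g : B -> B,
    (forall x y, L x -> L y -> g (x + y) = g x + g y) /\
    (forall a x, L x -> g (f a * x) = f a * g x) /\
    (forall x y, L x -> L y -> g x = g y -> x = y) /\
    (forall z, L' z <-> exists x, L x /\ z = g x).

Definition iso_to_sub (M : lmodType A) (L : B -> Prop) : Prop :=
  exists phi : M -> B,
    (forall m n, phi (m + n) = phi m + phi n) /\
    (forall a m, phi (a *: m) = f a * phi m) /\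
    injective phi /\
    (forall z, L z <-> exists m, z = phi m).

Definition mult_is_tensor (L L' : B -> Prop) : Prop :=
  forall (N : lmodType A) (beta : B -> B -> N),
    (forall x x' y, L x -> L x' -> L' y -> beta (x + x') y = beta x y + beta x' y) ->
    (forall x y y', L x -> L' y -> L' y' -> beta x (y + y') = beta x y + beta x y') ->
    (forall a x y, L x -> L' y ->
        beta (f a * x) y = a *: beta x y /\ beta x (f a * y) = a *: beta x y) ->
    exists h : B -> N,
      ((forall z z', subprod L L' z -> subprod L L' z' -> h (z + z') = h z + h z') /\
       (forall a z, subprod L L' z -> h (f a * z) = a *: h z)) /\
      (forall x y, L x -> L' y -> h (x * y) = beta x y) /\
      (forall h' : B -> N,
        (forall z z', subprod L L' z -> subprod L L' z' -> h' (z + z') = h' z + h' z') ->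
        (forall a z, subprod L L' z -> h' (f a * z) = a *: h' z) ->
        (forall x y, L x -> L' y -> h' (x * y) = beta x y) ->
        forall z, subprod L L' z -> h' z = h z).
End Ext.

Section Pic.
Variable A : comPzRingType.

Definition Alinear (M N : lmodType A) (h : M -> N) : Prop :=
  (forall x y, h (x + y) = h x + h y) /\ (forall a x, h (a *: x) = a *: h x).

Definition fin_gen (M : lmodType A) : Prop :=
  exists n (g : 'I_n -> M), forall m, exists c : 'I_n -> A, m = \sum_(i < n) c i *: g i.

Definition projective (M : lmodType A) : Prop :=
  forall (N P : lmodType A) (p : N -> P) (h : M -> P),
    Alinear p -> (forall y, exists x, p x = y) -> Alinear h ->
    exists g : M -> N, Alinear g /\ forall m, p (g m) = h m.

(* M_p is free of rank 1 over A_p (localization written out):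
   some m/1 generates M_p and has zero annihilator in A_p *)
Definition rank1_at (M : lmodType A) (p : A -> Prop) : Prop :=
  exists m : M,
    (forall x : M, exists s a, ~ p s /\ s *: x = a *: m) /\
    (forall a, a *: m = 0 -> exists s, ~ p s /\ s * a = 0).

Definition const_rank1 (M : lmodType A) : Prop :=
  forall p : A -> Prop, is_prime_ideal p -> rank1_at M p.

Definition in_Pic (M : lmodType A) : Prop :=
  fin_gen M /\ projective M /\ const_rank1 M.
End Pic.

(* Main.v *)
Require Import Defs.
From HB Require Import structures.
From mathcomp Require Import all_boot all_order all_algebra.
From mathcomp Require Import boolp classical_sets ring.
Set Implicit Arguments. Unset Strict Implicit. Unset Printing Implicit Defensive.
Import GRing.Theory.
Local Open Scope ring_scope.


Section Krull.
Variable R : comPzRingType.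
Local Open Scope classical_set_scope.

Lemma ideal_opp (I : R -> Prop) x : is_ideal I -> I x -> I (- x).
Proof. by case=> _ [_ HM] Ix; rewrite -mulN1r; apply: HM. Qed.

Lemma ideal_mulr (I : R -> Prop) x r : is_ideal I -> I x -> I (x * r).
Proof. by case=> _ [_ HM] Ix; rewrite mulrC; apply: HM. Qed.

Lemma ideal_sum (I : R -> Prop) n (F : 'I_n -> R) :
  is_ideal I -> (forall i, I (F i)) -> I (\sum_(i < n) F i).
Proof.
move=> [H0 [HD _]] HF; apply: (big_ind I) => //.
Qed.

Lemma krull (I : R -> Prop) : is_ideal I -> ~ I 1 ->
  exists M, is_maximal_ideal M /\ (forall x, I x -> M x).
Proof.
move=> HI HI1.
pose P := fun (X : set R) => X = set0 \/ (is_ideal X /\ ~ X 1 /\ (forall x, I x -> X x)).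
have [X [PX Xmax]] : exists X, P X /\ forall Y, (X `<` Y) -> ~ P Y.
  apply: Zorn_bigcup => F FP Ftot.
  have [allE|] := pselect (forall X, F X -> X = set0); last first.
  - move=> /existsNP [X0 /not_implyP [FX0 X0n]].
    right.
    have [x0 X0x0] : exists x, X0 x.
      apply: contra_notP X0n => nx; apply/seteqP; split=> x //= ?; apply: nx; by exists x.
    have FI : forall X, F X -> (exists x, X x) -> is_ideal X /\ ~ X 1 /\ (forall x, I x -> X x).
      move=> X FX [x Xx]; case: (FP X FX) => // HX; by rewrite HX in Xx.
    have [HX0 [HX01 HX0I]] := FI X0 FX0 (ex_intro _ x0 X0x0).
    split; [split; [|split] | split].
    + exists X0 => //; by case: HX0.
    + move=> x y [X FX Xx] [Y FY Yy].
      have [iX _] := FI X FX (ex_intro _ x Xx).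
      have [iY _] := FI Y FY (ex_intro _ y Yy).
      case: (Ftot X Y FX FY) => [XY|YX].
      * exists Y => //; case: iY => _ [HD _]; apply: HD => //; exact: XY.
      * exists X => //; case: iX => _ [HD _]; apply: HD => //; exact: YX.
    + move=> r x [X FX Xx]; have [[_ [_ HM]] _] := FI X FX (ex_intro _ x Xx).
      by exists X => //; apply: HM.
    + move=> [X FX X1]; have [_ [HX1 _]] := FI X FX (ex_intro _ 1 X1); exact: HX1.
    + by move=> x Ix; exists X0 => //; apply: HX0I.
  - left; apply/seteqP; split=> x //= [X FX Xx]; by rewrite (allE X FX) in Xx.
have XI : is_ideal X /\ ~ X 1 /\ (forall x, I x -> X x).
  case: PX => // X0; exfalso; apply: (Xmax I); last by right.
  rewrite X0; split; first by [].
  move=> E; apply: (E 0); by case: HI.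
case: XI => iX [X1 XI]; exists X; split => //; split => //; split => //.
move=> J iJ J1 XJ x Jx; apply: contrapT => nXx.
apply: (Xmax J); last by right; split=> //; split=> // y Iy; apply: XJ; apply: XI.
split; first exact: XJ.
move=> E; apply: nXx; exact: E.
Qed.

Lemma max_prime (M : R -> Prop) : is_maximal_ideal M -> is_prime_ideal M.
Proof.
move=> [iM [M1 Mmax]]; split=> //; split=> // x y Mxy.
have [Mx|nMx] := pselect (M x); [by left|right].
pose J := fun z => exists m r, M m /\ z = m + r * x.
have iJ : is_ideal J.
  case: iM => M0 [MD MM]; split; first by exists 0, 0; rewrite mul0r addr0.
  split.
  - move=> _ _ [m [r [Mm ->]]] [m' [r' [Mm' ->]]]; exists (m + m'), (r + r').
    by split; [apply: MD|rewrite mulrDl addrACA].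
  - move=> s _ [m [r [Mm ->]]]; exists (s * m), (s * r); split; first exact: MM.
    by rewrite mulrDr mulrA.
have J1 : J 1.
  apply: contrapT => nJ1; apply: nMx; apply: (Mmax J iJ nJ1).
    by move=> m Mm; exists m, 0; rewrite mul0r addr0.
  by exists 0, 1; rewrite add0r mul1r; split => //; case: iM.
case: J1 => m [r [Mm E]].
have -> : y = (m * y) + r * (x * y) by rewrite mulrA -mulrDl -E mul1r.
case: iM => _ [MD MM]; apply: MD; [rewrite mulrC|]; exact: MM.
Qed.

Lemma prime_prod (P : R -> Prop) n (F : 'I_n -> R) :
  is_prime_ideal P -> (forall i, ~ P (F i)) -> ~ P (\prod_(i < n) F i).
Proof.
move=> [_ [P1 Pp]] HF; apply: (big_ind (fun x => ~ P x)) => // x y nx ny.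
by case/Pp.
Qed.

End Krull.


Lemma sum_on (T : zmodType) (N : zmodType) (P : T -> Prop) (g : T -> N) n (F : 'I_n -> T) :
  P 0 -> (forall x y, P x -> P y -> P (x + y)) ->
  (forall x y, P x -> P y -> g (x + y) = g x + g y) ->
  (forall i, P (F i)) -> P (\sum_(i < n) F i) /\ g (\sum_(i < n) F i) = \sum_(i < n) g (F i).
Proof.
move=> P0 PD gD PF; elim: n F PF => [|n IH] F PF.
  rewrite !big_ord0; split => //.
  by apply: (addrI (g 0)); rewrite -gD // !addr0.
rewrite !big_ord_recr /=; have [IH1 IH2] := IH (fun i => F (widen_ord (leqnSn n) i)) (fun i => PF _).
by split; [apply: PD|rewrite gD // IH2].
Qed.

Section Gen.
Variables (A B : comPzRingType) (f : {rmorphism A -> B}).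
Hypothesis finj : injective f.

Definition ainv (b : B) : A :=
  match pselect (exists a, f a = b) with left e => projT1 (cid e) | right _ => 0 end.

Lemma ainvK b : Aimg f b -> f (ainv b) = b.
Proof.
move=> [a ->]; rewrite /ainv; case: pselect => [e|[]]; last by exists a.
by case: (cid e).
Qed.

Lemma ainvf a : ainv (f a) = a.
Proof. by apply: finj; rewrite ainvK //; exists a. Qed.

Lemma Aimg0 : Aimg f 0. Proof. by exists 0; rewrite rmorph0. Qed.
Lemma Aimg1 : Aimg f 1. Proof. by exists 1; rewrite rmorph1. Qed.
Lemma AimgD x y : Aimg f x -> Aimg f y -> Aimg f (x + y).
Proof. by move=> [a ->] [b ->]; exists (a + b); rewrite rmorphD. Qed.
Lemma AimgM x y : Aimg f x -> Aimg f y -> Aimg f (x * y).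
Proof. by move=> [a ->] [b ->]; exists (a * b); rewrite rmorphM. Qed.
Lemma Aimg_sum n (F : 'I_n -> B) : (forall i, Aimg f (F i)) -> Aimg f (\sum_(i < n) F i).
Proof. move=> H; apply: (big_ind (Aimg f)) => //; [exact: Aimg0|exact: AimgD]. Qed.

Lemma ainvD x y : Aimg f x -> Aimg f y -> ainv (x + y) = ainv x + ainv y.
Proof. by move=> [a ->] [b ->]; rewrite -rmorphD !ainvf. Qed.
Lemma ainvM x y : Aimg f x -> Aimg f y -> ainv (x * y) = ainv x * ainv y.
Proof. by move=> [a ->] [b ->]; rewrite -rmorphM !ainvf. Qed.
Lemma ainvZ a y : Aimg f y -> ainv (f a * y) = a * ainv y.
Proof. by move=> [b ->]; rewrite -rmorphM !ainvf. Qed.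
Lemma ainv_sum n (F : 'I_n -> B) : (forall i, Aimg f (F i)) ->
  ainv (\sum_(i < n) F i) = \sum_(i < n) ainv (F i).
Proof.
move=> H; have [_ ->] := @sum_on B A (Aimg f) ainv n F Aimg0 AimgD ainvD H; done.
Qed.

Lemma subprod1 (L L' : B -> Prop) x y : L x -> L' y -> subprod L L' (x * y).
Proof.
move=> Lx Ly; exists 1%N, (fun _ => x), (fun _ => y); split => //.
by rewrite big_ord1.
Qed.

Lemma subprod0 (L L' : B -> Prop) : subprod L L' 0.
Proof. exists 0%N, (fun _ => 0), (fun _ => 0); split; [by case|by rewrite big_ord0]. Qed.

Lemma subprodD (L L' : B -> Prop) z z' : subprod L L' z -> subprod L L' z' ->
  subprod L L' (z + z').
Proof.
move=> [n [xs [ys [Hs ->]]]] [m [xs' [ys' [Hs' ->]]]].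
exists (n + m)%N, (fun i => match split i with inl j => xs j | inr k => xs' k end),
  (fun i => match split i with inl j => ys j | inr k => ys' k end).
split.
  by move=> i; case: (split i).
rewrite big_split_ord /=; congr (_ + _); apply: eq_bigr => i _.
  by rewrite (unsplitK (inl i)).
by rewrite (unsplitK (inr i)).
Qed.

Lemma Asubmod_sum (L : B -> Prop) n (F : 'I_n -> B) : Asubmod f L ->
  (forall i, L (F i)) -> L (\sum_(i < n) F i).
Proof. move=> [L0 [LD _]] H; exact: (big_ind L). Qed.

Lemma Asubmod_opp (L : B -> Prop) x : Asubmod f L -> L x -> L (- x).
Proof. move=> [_ [_ LM]] Lx; by rewrite -mulN1r -(rmorphN1 f); apply: LM. Qed.

End Gen.


Section Inv.
Variables (A B : comPzRingType) (f : {rmorphism A -> B}).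
Hypothesis finj : injective f.

Lemma inv_data L : invertible f L -> exists L' n (xs ys : 'I_n -> B),
  [/\ Asubmod f L, Asubmod f L', (forall x y, L x -> L' y -> Aimg f (x * y)),
      (forall i, L (xs i) /\ L' (ys i)) & \sum_(i < n) xs i * ys i = 1].
Proof.
move=> [HL [L' [HL' E]]].
have [n [xs [ys [Hs H1]]]] : subprod L L' 1 by apply/E; exact: Aimg1.
exists L', n, xs, ys; split => // x y Lx Ly; apply/E; exact: subprod1.
Qed.

Lemma expand L L' n (xs ys : 'I_n -> B) z :
  (forall x y, L x -> L' y -> Aimg f (x * y)) ->
  (forall i, L (xs i) /\ L' (ys i)) -> \sum_(i < n) xs i * ys i = 1 -> L z ->
  z = \sum_(i < n) f (ainv f (z * ys i)) * xs i.
Proof.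
move=> Hp Hs H1 Lz.
rewrite -[z in LHS]mulr1 -H1 mulr_sumr; apply: eq_bigr => i _.
rewrite ainvK; last by apply: Hp => //; case: (Hs i).
by ring.
Qed.

Lemma part2 L L' : invertible f L -> invertible f L' ->
  same_class f L L' -> submod_iso f L L'.
Proof.
move=> iL _ [x [[y xy] E]].
have [_ [n [xs [ys [HL _ _ _ _]]]]] := inv_data iL.
exists (fun z => z * x); split; [|split; [|split]].
- by move=> ? ? _ _; rewrite mulrDl.
- by move=> ? ? _; rewrite mulrA.
- by move=> z z' _ _ E'; rewrite -[z]mulr1 -[z']mulr1 -xy !mulrA E'.
- move=> z; split.
  + move/E => [m [as_ [bs [Hs ->]]]].
    have Hb : forall i, exists a, bs i = f a * x by move=> i; case: (Hs i) => _ [a ->]; exists a.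
    have [c Hc] := fin_all_exists Hb.
    exists (\sum_(i < m) f (c i) * as_ i); split.
      apply: (Asubmod_sum HL) => i; case: HL => _ [_ HM]; apply: HM; by case: (Hs i).
    rewrite mulr_suml; apply: eq_bigr => i _; by rewrite Hc; ring.
  + move=> [l [Ll ->]]; apply/E.
    have -> : l * x = l * (f 1 * x) by rewrite rmorph1 mul1r.
    apply: subprod1 => //; by exists 1.
Qed.

Lemma part4 L L' : invertible f L -> invertible f L' ->
  submod_iso f L L' -> same_class f L L'.
Proof.
move=> iL iL' [g [gD [gZ [ginj gim]]]].
have [K [n [xs [ys [HL HK HLK Hs H1]]]]] := inv_data iL.
have [K' [n' [xs' [ys' [HL' HK' HLK' Hs' H1']]]]] := inv_data iL'.
pose w := \sum_(i < n) g (xs i) * ys i.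
have gw : forall z, L z -> g z = z * w.
  move=> z Lz.
  have Hz := expand HLK Hs H1 Lz.
  have Lt : forall i, L (f (ainv f (z * ys i)) * xs i).
    move=> i; case: HL => _ [_ HM]; apply: HM; by case: (Hs i).
  rewrite {1}Hz.
  have [_ ->] := @sum_on B B L g n _ (proj1 HL) (proj1 (proj2 HL)) gD Lt.
  rewrite /w [in RHS]mulr_sumr; apply: eq_bigr => i _.
  rewrite gZ; last by case: (Hs i).
  rewrite ainvK; last by apply: HLK => //; case: (Hs i).
  by ring.
have Hpre : forall j, exists z, L z /\ xs' j = g z.
  by move=> j; apply/gim; case: (Hs' j).
have [zs Hzs] := fin_all_exists Hpre.
pose w' := \sum_(j < n') zs j * ys' j.
have back : forall z, L z -> z = g z * w'.
  move=> z Lz.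
  have L'gz : L' (g z) by apply/gim; exists z.
  have Hz := expand HLK' Hs' H1' L'gz.
  have Lt : forall j, L (f (ainv f (g z * ys' j)) * zs j).
    move=> j; case: HL => _ [_ HM]; apply: HM; by case: (Hzs j).
  have [Ls Es] := @sum_on B B L g n' _ (proj1 HL) (proj1 (proj2 HL)) gD Lt.
  have Hzz : z = \sum_(j < n') f (ainv f (g z * ys' j)) * zs j.
    apply: ginj => //; rewrite Es {1}Hz; apply: eq_bigr => j _.
    case: (Hzs j) => Lzj ->; rewrite gZ //.
  rewrite {1}Hzz /w' mulr_sumr; apply: eq_bigr => j _.
  rewrite ainvK; last by apply: HLK' => //; case: (Hs' j).
  by ring.
have ww' : w * w' = 1.
  rewrite -[LHS]mul1r -{1}H1 mulr_suml -[RHS]H1; apply: eq_bigr => i _.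
  case: (Hs i) => Lx _; rewrite [in RHS](back _ Lx) gw //; by ring.
exists w; split; first by exists w'.
move=> z; split.
- move/gim => [l [Ll ->]]; rewrite gw //.
  have -> : l * w = l * (f 1 * w) by rewrite rmorph1 mul1r.
  apply: subprod1 => //; by exists 1.
- move=> [m [as_ [bs [Hb ->]]]].
  have Hc : forall i, exists a, bs i = f a * w by move=> i; case: (Hb i) => _ [a ->]; exists a.
  have [c Hcc] := fin_all_exists Hc.
  apply/gim; exists (\sum_(i < m) f (c i) * as_ i); split.
    apply: (Asubmod_sum HL) => i; case: HL => _ [_ HM]; apply: HM; by case: (Hb i).
  rewrite gw; last by apply: (Asubmod_sum HL) => i; case: HL => _ [_ HM]; apply: HM; by case: (Hb i).
  rewrite mulr_suml; apply: eq_bigr => i _; rewrite Hcc; by ring.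
Qed.
End Inv.


Section Tensor.
Variables (A B : comPzRingType) (f : {rmorphism A -> B}).
Hypothesis finj : injective f.

Lemma part3 L L' : invertible f L -> invertible f L' -> mult_is_tensor f L L'.
Proof.
move=> iL iL'.
have [K [n [xs [ys [HL HK HLK Hs H1]]]]] := inv_data iL.
have [K' [n' [us [vs [HL' HK' HLK' Hs' H1']]]]] := inv_data iL'.
move=> N beta bD1 bD2 bZ.
have Aim : forall z i j, subprod L L' z -> Aimg f (z * ys i * vs j).
  move=> z i j [m [p [q [Hpq ->]]]].
  rewrite mulr_suml mulr_suml; apply: Aimg_sum => k.
  have -> : p k * q k * ys i * vs j = (p k * ys i) * (q k * vs j) by ring.
  case: (Hpq k) => Lp Lq; apply: AimgM; [apply: HLK|apply: HLK'] => //.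
    by case: (Hs i). by case: (Hs' j).
pose h z := \sum_(i < n) \sum_(j < n') ainv f (z * ys i * vs j) *: beta (xs i) (us j).
have hD : forall z z', subprod L L' z -> subprod L L' z' -> h (z + z') = h z + h z'.
  move=> z z' Hz Hz'; rewrite /h -big_split; apply: eq_bigr => i _.
  rewrite -big_split; apply: eq_bigr => j _.
  by rewrite mulrDl mulrDl ainvD ?scalerDl //; apply: Aim.
have hZ : forall a z, subprod L L' z -> h (f a * z) = a *: h z.
  move=> a z Hz; rewrite /h scaler_sumr; apply: eq_bigr => i _.
  rewrite scaler_sumr; apply: eq_bigr => j _.
  have -> : f a * z * ys i * vs j = f a * (z * ys i * vs j) by ring.
  rewrite ainvZ ?scalerA //; exact: Aim.
have b01 : forall y, L' y -> beta 0 y = 0.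
  move=> y Ly; apply: (addrI (beta 0 y)); rewrite -bD1 ?addr0 //; by case: HL.
have b02 : forall x, L x -> beta x 0 = 0.
  move=> x Lx; apply: (addrI (beta x 0)); rewrite -bD2 ?addr0 //; by case: HL'.
have hxy : forall x y, L x -> L' y -> h (x * y) = beta x y.
  move=> x y Lx Ly; rewrite /h.
  have E1 : forall i j, ainv f (x * y * ys i * vs j) = ainv f (x * ys i) * ainv f (y * vs j).
    move=> i j; have -> : x * y * ys i * vs j = (x * ys i) * (y * vs j) by ring.
    by rewrite ainvM //; [apply: HLK => //; case: (Hs i)|apply: HLK' => //; case: (Hs' j)].
  have E2 : forall i, L (xs i) -> \sum_(j < n') ainv f (x * y * ys i * vs j) *: beta (xs i) (us j)
      = ainv f (x * ys i) *: beta (xs i) y.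
    move=> i Lxi.
    have Lt : forall j, L' (f (ainv f (y * vs j)) * us j).
      move=> j; case: HL' => _ [_ HM]; apply: HM; by case: (Hs' j).
    have [_ Es] := @sum_on B N L' (beta (xs i)) n' _ (proj1 HL') (proj1 (proj2 HL'))
       (fun a b La Lb => bD2 _ _ _ Lxi La Lb) Lt.
    rewrite {2}(expand HLK' Hs' H1' Ly) Es scaler_sumr; apply: eq_bigr => j _.
    case: (Hs' j) => Luj _.
    by rewrite E1 -scalerA (proj2 (bZ _ _ _ Lxi Luj)).
  rewrite (eq_bigr (fun i => ainv f (x * ys i) *: beta (xs i) y)); last first.
    by move=> i _; apply: E2; case: (Hs i).
  have Lt : forall i, L (f (ainv f (x * ys i)) * xs i).
    move=> i; case: HL => _ [_ HM]; apply: HM; by case: (Hs i).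
  have [_ Es] := @sum_on B N L (beta^~ y) n _ (proj1 HL) (proj1 (proj2 HL))
       (fun a b La Lb => bD1 _ _ _ La Lb Ly) Lt.
  rewrite [in RHS](expand HLK Hs H1 Lx) Es; apply: eq_bigr => i _.
  case: (Hs i) => Lxi _.
  by rewrite (proj1 (bZ _ _ _ Lxi Ly)).
exists h; split; first by split.
split; first exact: hxy.
move=> h' h'D h'Z h'xy z [m [p [q [Hpq ->]]]].
have Sp : forall k, subprod L L' (p k * q k) by move=> k; case: (Hpq k) => ? ?; exact: subprod1.
have [_ ->] := @sum_on B N (subprod L L') h' m _ (subprod0 _ _) (@subprodD _ _ _) h'D Sp.
have [_ ->] := @sum_on B N (subprod L L') h m _ (subprod0 _ _) (@subprodD _ _ _) hD Sp.
apply: eq_bigr => k _; case: (Hpq k) => Lp Lq; by rewrite h'xy // hxy.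
Qed.
End Tensor.


Section SubMod.
Variables (A B : comPzRingType) (f : {rmorphism A -> B}) (L : B -> Prop) (HL : Asubmod f L).

Definition Ltype (_ : Asubmod f L) := {x : B | `[< L x >]}.
Local Notation LT := (Ltype HL).
HB.instance Definition _ := Choice.copy LT {x : B | `[< L x >]}.

Lemma L0 : `[< L 0 >]. Proof. by apply/asboolP; case: HL. Qed.
Lemma LD (u v : LT) : `[< L (val u + val v) >].
Proof. case: HL => _ [HD _]; apply/asboolP; apply: HD; apply/asboolP; [exact: (valP u) | exact: (valP v)]. Qed.
Lemma LS a (u : LT) : `[< L (f a * val u) >].
Proof. case: HL => _ [_ HS]; apply/asboolP; apply: HS; apply/asboolP; exact: (valP u). Qed.
Lemma LN (u : LT) : `[< L (- val u) >].
Proof. have := LS (-1) u; by rewrite rmorphN1 mulN1r. Qed.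

Definition Lzero : LT := exist (fun x => `[< L x >]) 0 L0.
Definition Ladd (u v : LT) : LT := exist (fun x => `[< L x >]) _ (LD u v).
Definition Lopp (u : LT) : LT := exist (fun x => `[< L x >]) _ (LN u).
Definition Lscale a (u : LT) : LT := exist (fun x => `[< L x >]) _ (LS a u).

Lemma Lval_inj : injective (fun u : LT => val u).
Proof. exact: val_inj. Qed.

Lemma LaddA : associative Ladd.
Proof. by move=> x y z; apply: val_inj; rewrite /= addrA. Qed.
Lemma LaddC : commutative Ladd.
Proof. by move=> x y; apply: val_inj; rewrite /= addrC. Qed.
Lemma Ladd0 : left_id Lzero Ladd.
Proof. by move=> x; apply: val_inj; rewrite /= add0r. Qed.
Lemma LaddN : left_inverse Lzero Lopp Ladd.
Proof. by move=> x; apply: val_inj; rewrite /= addNr. Qed.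
HB.instance Definition _ := GRing.isZmodule.Build LT LaddA LaddC Ladd0 LaddN.

Lemma LscaleA a b v : Lscale a (Lscale b v) = Lscale (a * b) v.
Proof. by apply: val_inj; rewrite /= rmorphM mulrA. Qed.
Lemma Lscale1 : left_id 1 Lscale.
Proof. by move=> v; apply: val_inj; rewrite /= rmorph1 mul1r. Qed.
Lemma LscaleDr : right_distributive Lscale +%R.
Proof. by move=> a u v; apply: val_inj; rewrite /= mulrDr. Qed.
Lemma LscaleDl v : {morph Lscale^~ v: a b / a + b}.
Proof. by move=> a b; apply: val_inj; rewrite /= rmorphD mulrDl. Qed.
HB.instance Definition _ := GRing.Zmodule_isLmodule.Build A LT LscaleA Lscale1 LscaleDr LscaleDl.
Lemma LvalD (x y : LT) : val (x + y) = val x + val y. Proof. by []. Qed.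
Lemma LvalZ a (x : LT) : val (a *: x) = f a * val x. Proof. by []. Qed.
Lemma Lval0 : val (0 : LT) = 0. Proof. by []. Qed.
End SubMod.

Lemma Ltype_val_sum (A B : comPzRingType) (f : {rmorphism A -> B}) L (HL : Asubmod f L) n (F : 'I_n -> Ltype HL) :
  val (\sum_(i < n) F i) = \sum_(i < n) val (F i).
Proof.
have [_ ->] := @sum_on (Ltype HL) B (fun _ => True) (fun u => val u) n F I (fun _ _ _ _ => I)
  (fun _ _ _ _ => erefl) (fun _ => I); done.
Qed.

Section Part1.
Variables (A B : comPzRingType) (f : {rmorphism A -> B}).
Hypothesis finj : injective f.

Lemma part1 L : invertible f L -> exists M : lmodType A, in_Pic M /\ iso_to_sub f M L.
Proof.
move=> iL.
have [K [n [xs [ys [HL HK HLK Hs H1]]]]] := inv_data iL.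
pose M := Ltype HL.
have Lxs : forall i, `[< L (xs i) >] by move=> i; apply/asboolP; case: (Hs i).
pose gen i : M := exist (fun x => `[< L x >]) (xs i) (Lxs i).
have Lval : forall m : M, L (val m) by move=> m; apply/asboolP; exact: (valP m).
have Aim : forall (m : M) i, Aimg f (val m * ys i).
  by move=> m i; apply: HLK => //; case: (Hs i).
have Lsval : forall m : M, L (sval m) by move=> m; apply/asboolP; exact: (svalP m).
have AimL : forall b i, L b -> Aimg f (b * ys i).
  by move=> b i Lb; apply: HLK => //; case: (Hs i).
have expM : forall m : M, m = \sum_(i < n) ainv f (val m * ys i) *: gen i.
  move=> m; apply: val_inj; rewrite Ltype_val_sum /=.
  exact: (expand HLK Hs H1 (Lval m)).
exists M; split; last first.
  exists (fun m : M => val m); split => //; split => //; split; first exact: val_inj.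
  move=> z; split; last by move=> [m ->].
  move=> Lz; have Lz' : `[< L z >] by apply/asboolP.
  by exists (exist (fun x => `[< L x >]) z Lz').
split; [|split].
- by exists n, gen => m; exists (fun i => ainv f (val m * ys i)); exact: expM.
- move=> N P p h [pD pZ] psurj [hD hZ].
  have [ns Hns] := fin_all_exists (fun i => psurj (h (gen i))).
  exists (fun m : M => \sum_(i < n) ainv f (val m * ys i) *: ns i); split.
    split.
    + move=> x y; rewrite -big_split; apply: eq_bigr => i _ /=.
      by rewrite mulrDl ainvD ?scalerDl //; apply: AimL; exact: Lsval.
    + move=> a x; rewrite scaler_sumr; apply: eq_bigr => i _ /=.
      by rewrite -mulrA ainvZ ?scalerA //; apply: AimL; exact: Lsval.
  move=> m.
  have [_ ->] := @sum_on N P (fun _ => True) p n (fun i => ainv f (val m * ys i) *: ns i) I (fun _ _ _ _ => I)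
    (fun x y _ _ => pD x y) (fun _ => I).
  rewrite [in RHS](expM m).
  have [_ ->] := @sum_on M P (fun _ => True) h n (fun i => ainv f (val m * ys i) *: gen i) I (fun _ _ _ _ => I)
    (fun x y _ _ => hD x y) (fun _ => I).
  by apply: eq_bigr => i _; rewrite pZ hZ Hns.
- move=> p [[p0 [pD pM]] [p1 pp]].
  have Hc : exists j, ~ p (ainv f (xs j * ys j)).
    apply: contrapT => nH; apply: p1.
    have -> : (1 : A) = \sum_(i < n) ainv f (xs i * ys i).
      rewrite -ainv_sum //; first by rewrite H1 -(rmorph1 f) ainvf.
      by move=> i; case: (Hs i) => ? ?; apply: HLK.
    apply: (big_ind p) => // i _; apply: contrapT => npi; apply: nH; by exists i.
  case: Hc => j Hj.
  have Ajj : Aimg f (xs j * ys j) by case: (Hs j) => ? ?; apply: HLK.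
  exists (gen j); split.
  + move=> x; exists (ainv f (xs j * ys j)), (ainv f (val x * ys j)); split => //.
    apply: val_inj => /=; rewrite (ainvK Ajj) (ainvK (AimL _ j (Lsval x))); ring.
  + move=> a Ha; exists (ainv f (xs j * ys j)); split => //.
    apply: finj; rewrite rmorphM ainvK // rmorph0.
    have E : f a * xs j = 0 := congr1 val Ha.
    have -> : xs j * ys j * f a = (f a * xs j) * ys j by ring.
    by rewrite E mul0r.
Qed.
End Part1.


Section ASide.
Variables (A : comPzRingType) (M : lmodType A) (n : nat) (mg : 'I_n -> M)
  (phi : 'I_n -> M -> A).
Hypothesis phiD : forall k x y, phi k (x + y) = phi k x + phi k y.
Hypothesis phiZ : forall k a x, phi k (a *: x) = a * phi k x.
Hypothesis phiE : forall m, m = \sum_(i < n) phi i m *: mg i.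
Hypothesis rk : const_rank1 M.

Definition E i k := phi k (mg i).

Lemma phi_sum k (c : 'I_n -> A) : phi k (\sum_(i < n) c i *: mg i) = \sum_(i < n) c i * E i k.
Proof.
have [_ ->] := @sum_on M A (fun _ => True) (phi k) n (fun i => c i *: mg i) I
  (fun _ _ _ _ => I) (fun x y _ _ => phiD k x y) (fun _ => I).
by apply: eq_bigr => i _; rewrite phiZ.
Qed.

Lemma phiE2 k m : phi k m = \sum_(j < n) phi j m * E j k.
Proof. by rewrite {1}(phiE m) phi_sum. Qed.

Lemma E2 i k : \sum_(j < n) E i j * E j k = E i k.
Proof. by rewrite [RHS]phiE2. Qed.

Lemma minor i j l k : E i j * E l k = E i k * E l j.
Proof.
apply/eqP; rewrite -subr_eq0; apply/eqP.
set x := _ - _.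
apply: contrapT => nx.
pose I := fun a : A => a * x = 0.
have iI : is_ideal I.
  split; first by rewrite /I mul0r.
  split; first by move=> a b; rewrite /I mulrDl => -> ->; rewrite addr0.
  by move=> r a; rewrite /I -mulrA => ->; rewrite mulr0.
have nI1 : ~ I 1 by rewrite /I mul1r.
have [Mx [mMx IMx]] := krull iI nI1.
have [iMx [Mx1 Mxp]] := max_prime mMx.
have [m0 [Hgen _]] := rk (max_prime mMx).
have [s1 [a1 [ns1 e1]]] := Hgen (mg i).
have [s2 [a2 [ns2 e2]]] := Hgen (mg l).
have f1 : s1 * E i j = a1 * phi j m0 by rewrite /E -(phiZ j s1) e1 phiZ.
have f2 : s1 * E i k = a1 * phi k m0 by rewrite /E -(phiZ k s1) e1 phiZ.
have f3 : s2 * E l k = a2 * phi k m0 by rewrite /E -(phiZ k s2) e2 phiZ.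
have f4 : s2 * E l j = a2 * phi j m0 by rewrite /E -(phiZ j s2) e2 phiZ.
have : I (s1 * s2).
  rewrite /I /x.
  transitivity ((s1 * E i j) * (s2 * E l k) - (s1 * E i k) * (s2 * E l j)); first by ring.
  rewrite f1 f2 f3 f4; ring.
move/IMx/Mxp => [] //.
Qed.

Lemma nonvanish (p : A -> Prop) : is_prime_ideal p -> exists i k, ~ p (E i k).
Proof.
move=> pp; apply: contrapT => H.
have allp : forall i k, p (E i k).
  move=> i k; apply: contrapT => nk; apply: H; by exists i, k.
have [[p0 [pD pM]] [p1 ppr]] := pp.
have [m0 [Hgen Hann]] := rk pp.
pose Q (y : M) := exists s a, ~ p s /\ p a /\ s *: y = a *: m0.
have Q0 : Q 0 by exists 1, 0; split => //; split => //; rewrite scale1r scale0r.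
have QD : forall x y, Q x -> Q y -> Q (x + y).
  move=> x y [s [a [ns [pa ex]]]] [s' [a' [ns' [pa' ey]]]].
  exists (s * s'), (s' * a + s * a'); split; first by case/ppr.
  split; first by apply pD; apply pM.
  rewrite scalerDr scalerDl.
  have -> : (s * s') *: x = s' *: (s *: x) by rewrite scalerA mulrC.
  have -> : (s * s') *: y = s *: (s' *: y) by rewrite scalerA.
  by rewrite ex ey !scalerA.
have Qm0 : Q m0.
  rewrite [X in Q X](phiE m0); apply: (big_ind Q) => // i _.
  have [s [a [ns esa]]] := Hgen (mg i).
  exists s, (phi i m0 * a); split => //; split.
    rewrite mulrC; apply pM; rewrite phiE2; apply: (big_ind p) => // j _.
    exact: (pM _ _ (allp j i)).
  rewrite scalerA; have -> : (s * phi i m0) *: mg i = phi i m0 *: (s *: mg i) by rewrite scalerA mulrC.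
  by rewrite esa scalerA.
have [s [a [ns [pa esa]]]] := Qm0.
have : (s - a) *: m0 = 0 by rewrite scalerBl esa subrr.
move/Hann => [t [nt ht]].
have : p (t * s).
  have -> : t * s = t * (s - a) + t * a by ring.
  by rewrite ht; apply pD => //; apply pM.
by case/ppr.
Qed.

End ASide.


Section Delta.
Variable B : comPzRingType.
Lemma sum_dr n (G : 'I_n -> B) k e :
  \sum_(l < n) G l * (if l == k then e else 0) = G k * e.
Proof.
rewrite (bigD1 k) //= eqxx big1 ?addr0 // => l /negbTE ->; by rewrite mulr0.
Qed.
Lemma sum_dl n (G : 'I_n -> B) k e :
  \sum_(l < n) (if l == k then e else 0) * G l = e * G k.
Proof.
rewrite (bigD1 k) //= eqxx big1 ?addr0 // => l /negbTE ->; by rewrite mul0r.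
Qed.

Definition UU n (F : 'I_n -> 'I_n -> B) (c d : 'I_n -> B) :=
  \sum_(j < n) \sum_(l < n) c j * F j l * d l.

Lemma UU_expand n (F : 'I_n -> 'I_n -> B) c d i k e1 e2 :
  UU F (fun j => c j + (if j == i then e1 else 0)) (fun l => d l + (if l == k then e2 else 0))
  = UU F c d + e2 * (\sum_(j < n) c j * F j k) + e1 * (\sum_(l < n) F i l * d l)
    + e1 * e2 * F i k.
Proof.
rewrite /UU.
have t : forall j l, (c j + (if j == i then e1 else 0)) * F j l * (d l + (if l == k then e2 else 0))
  = c j * F j l * d l + c j * F j l * (if l == k then e2 else 0)
    + (if j == i then e1 else 0) * (F j l * d l)
    + (if j == i then e1 else 0) * (F j l * (if l == k then e2 else 0)) by move=> j l; ring.
under eq_bigr => j _ do under eq_bigr => l _ do rewrite t.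
under eq_bigr => j _ do rewrite !big_split /= sum_dr -!mulr_sumr sum_dr.
rewrite !big_split /= sum_dl sum_dl.
congr (_ + _ + _ + _).
- by rewrite mulr_sumr; apply: eq_bigr => j _; ring.
- by ring.
Qed.
End Delta.


Section BSide.
Variables (A B : comPzRingType) (f : {rmorphism A -> B}).
Hypothesis finj : injective f.
Variables (M : lmodType A) (n : nat) (mg : 'I_n -> M) (phi : 'I_n -> M -> A).
Hypothesis phiD : forall k x y, phi k (x + y) = phi k x + phi k y.
Hypothesis phiZ : forall k a x, phi k (a *: x) = a * phi k x.
Hypothesis phiE : forall m, m = \sum_(i < n) phi i m *: mg i.
Hypothesis rk : const_rank1 M.

Let F j l := f (E mg phi j l).

Lemma nonvanishB (q : B -> Prop) : is_maximal_ideal q -> exists i k, ~ q (F i k).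
Proof.
move=> /max_prime [[q0 [qD qM]] [q1 qp]].
have pp : is_prime_ideal (fun a => q (f a)).
  split; [split; [|split]|split].
  - by rewrite rmorph0.
  - by move=> x y qx qy; rewrite rmorphD; apply qD.
  - by move=> r x qx; rewrite rmorphM; apply: qM.
  - by rewrite rmorph1.
  - by move=> x y; rewrite rmorphM; apply: qp.
exact: (nonvanish phiD phiZ phiE rk pp).
Qed.

Section Step.
Variables (N : nat) (Ms : 'I_N -> B -> Prop).

Lemma step r : (r <= N)%N -> exists c d, forall t : 'I_N, (t < r)%N ->
  is_maximal_ideal (Ms t) -> ~ Ms t (UU F c d).
Proof.
elim: r => [_|r IH rN]; first by exists (fun _ => 0), (fun _ => 0).
have [c [d Hcd]] := IH (ltnW rN).
pose tr : 'I_N := Ordinal rN.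
have Hnew : forall c' d', (forall t : 'I_N, (t < r)%N -> is_maximal_ideal (Ms t) -> ~ Ms t (UU F c' d'))
   -> (is_maximal_ideal (Ms tr) -> ~ Ms tr (UU F c' d')) ->
   forall t : 'I_N, (t < r.+1)%N -> is_maximal_ideal (Ms t) -> ~ Ms t (UU F c' d').
  move=> c' d' H1 H2 t; rewrite ltnS leq_eqVlt => /orP [/eqP Et|lt]; last exact: H1.
  have -> : t = tr by apply: val_inj.
  exact: H2.
have [[mtr Utr]|no] := pselect (is_maximal_ideal (Ms tr) /\ Ms tr (UU F c d)); last first.
  exists c, d; apply: Hnew => // mtr Utr; apply: no; by split.
have [[q0 [qD qM]] [q1 qp]] := max_prime mtr.
have ex_y : forall t : 'I_N, exists y, ~ Ms tr y /\
    ((t < r)%N -> is_maximal_ideal (Ms t) -> Ms t y).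
  move=> t.
  have [[tr' mt]|no] := pselect ((t < r)%N /\ is_maximal_ideal (Ms t)); last first.
    exists 1; split => // tr' mt; exfalso; apply: no; by split.
  have : ~ (forall x, Ms t x -> Ms tr x).
    move=> sub; apply: (Hcd t tr' mt).
    case: mt => _ [_ mmax]; apply: (mmax (Ms tr)) => //; by case: mtr.
  move=> /existsNP [y /not_implyP [Mty nMtry]].
  by exists y; split.
have [ys Hys] := fin_all_exists ex_y.
pose y := \prod_(t < N) ys t.
have ny : ~ Ms tr y.
  apply: prime_prod; first exact: max_prime.
  by move=> t; case: (Hys t).
have yin : forall t : 'I_N, (t < r)%N -> is_maximal_ideal (Ms t) -> Ms t y.
  move=> t tr' mt; rewrite /y (bigD1 t) //=.
  apply: ideal_mulr; first by case: mt.
  by case: (Hys t) => _ /(_ tr' mt).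
have [i [k nik]] := nonvanishB mtr.
pose al := \sum_(j < n) c j * F j k.
pose be := \sum_(l < n) F i l * d l.
have [c' [d' [Z [EZ nZ]]]] : exists c' d' Z, UU F c' d' = UU F c d + y * Z /\ ~ Ms tr Z.
  have [nb|pb] := pselect (Ms tr be).
  - have [na|pa] := pselect (Ms tr al).
    + exists (fun j => c j + (if j == i then y else 0)), (fun l => d l + (if l == k then y else 0)),
        (al + be + y * F i k); split.
        by rewrite UU_expand /al /be; ring.
      move=> HZ; have : Ms tr (y * F i k).
        have -> : y * F i k = (al + be + y * F i k) - al - be by ring.
        apply qD; [apply qD => //|]; by apply: ideal_opp.
      by case/qp.
    + exists c, (fun l => d l + (if l == k then y else 0)), al; split => //.
      have := UU_expand F c d i k 0 y.
      have -> : (fun j => c j + (if j == i then 0 else 0)) = c.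
        by apply: funext => j; case: (j == i); rewrite addr0.
      move=> ->; rewrite /al; ring.
  - exists (fun j => c j + (if j == i then y else 0)), d, be; split => //.
    have := UU_expand F c d i k y 0.
    have -> : (fun l => d l + (if l == k then 0 else 0)) = d.
      by apply: funext => j; case: (j == k); rewrite addr0.
    move=> ->; rewrite /be; ring.
exists c', d'; apply: Hnew.
- move=> t tr' mt HU; apply: (Hcd t tr' mt).
  have [[t0 [tD tM]] _] := max_prime mt.
  have -> : UU F c d = UU F c' d' - y * Z by rewrite EZ; ring.
  apply: tD => //; apply: ideal_opp; first by case: mt.
  apply: ideal_mulr; [by case: mt|exact: yin].
- move=> _ HU; have : Ms tr (y * Z).
    have -> : y * Z = UU F c' d' - UU F c d by rewrite EZ; ring.
    by apply qD => //; apply: ideal_opp.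
  by case/qp.
Qed.
End Step.


Lemma unitU : finitely_many_maximal_ideals B -> exists c d, unitB (UU F c d).
Proof.
move=> [N [Ms HMs]].
have [c [d Hcd]] := step Ms (leqnn N).
exists c, d; apply: contrapT => nu.
pose I := fun z => exists b, z = b * UU F c d.
have iI : is_ideal I.
  split; first by exists 0; rewrite mul0r.
  split.
  - by move=> _ _ [b ->] [b' ->]; exists (b + b'); rewrite mulrDl.
  - by move=> r _ [b ->]; exists (r * b); rewrite mulrA.
have nI1 : ~ I 1 by move=> [b Eb]; apply: nu; exists b; rewrite mulrC -Eb.
have [Mx [mMx IMx]] := krull iI nI1.
have [t Ht] := HMs Mx mMx.
have EM : Mx = Ms t by apply: funext => x; apply: propext; exact: Ht.
rewrite EM in mMx IMx.
apply: (Hcd t (ltn_ord t) mMx); apply: IMx; exists 1; by rewrite mul1r.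
Qed.

Lemma part5_core : finitely_many_maximal_ideals B ->
  exists L, invertible f L /\ iso_to_sub f M L.
Proof.
move=> Hmax.
have [c [d [uinv Hu]]] := unitU Hmax.
set u := UU F c d in Hu.
have minB : forall i j l k, F i j * F l k = F i k * F l j.
  by move=> i j l k; rewrite /F -!rmorphM (minor mg phiZ rk).
have E2B : forall i k, \sum_(j < n) F i j * F j k = F i k.
  move=> i k; rewrite /F -(E2 phiD phiZ phiE i k) rmorph_sum; apply: eq_bigr => j _.
  by rewrite rmorphM.
pose v k := \sum_(i < n) c i * F i k.
pose a i := (\sum_(k < n) F i k * d k) * uinv.
have sprod : forall G H : 'I_n -> B, (\sum_(j < n) G j) * (\sum_(l < n) H l) =
    \sum_(j < n) \sum_(l < n) G j * H l.
  by move=> G H; rewrite mulr_suml; apply: eq_bigr => j _; rewrite mulr_sumr.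
have F1 : forall i k, F i k = a i * v k.
  move=> i k.
  transitivity (uinv * ((\sum_(j < n) F i j * d j) * (\sum_(l < n) c l * F l k))); last first.
    by rewrite /a /v; ring.
  rewrite sprod.
  transitivity (uinv * (F i k * \sum_(j < n) \sum_(l < n) c l * F l j * d j)); last first.
    congr (_ * _); rewrite mulr_sumr; apply: eq_bigr => j _; rewrite mulr_sumr.
    apply: eq_bigr => l _.
    transitivity (c l * d j * (F i k * F l j)); first by ring.
    by rewrite -minB; ring.
  rewrite exchange_big /= -[LHS]mulr1 -Hu /u /UU; ring.
have F2 : \sum_(k < n) v k * a k = 1.
  rewrite -Hu /u /UU.
  transitivity (\sum_(k < n) uinv * ((\sum_(i < n) c i * F i k) * (\sum_(l < n) F k l * d l))).
    by apply: eq_bigr => k _; rewrite /v /a; ring.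
  under eq_bigr => k _ do rewrite sprod.
  rewrite -mulr_sumr mulrC; congr (_ * _).
  rewrite exchange_big; apply: eq_bigr => i _.
  rewrite exchange_big; apply: eq_bigr => l _.
  transitivity (c i * (\sum_(k < n) F i k * F k l) * d l); last by rewrite E2B.
  rewrite mulr_sumr mulr_suml; apply: eq_bigr => k _; ring.
pose theta (m : M) := \sum_(j < n) f (phi j m) * a j.
have key : forall m k, theta m * v k = f (phi k m).
  move=> m k; rewrite /theta mulr_suml (phiE2 phiD phiZ phiE k m) rmorph_sum.
  apply: eq_bigr => j _; by rewrite rmorphM -mulrA -F1.
have one : \sum_(i < n) theta (mg i) * v i = 1.
  rewrite -F2; apply: eq_bigr => i _; by rewrite key -/(E mg phi i i) -/(F i i) F1 mulrC.
have phi0 : forall k, phi k 0 = 0.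
  by move=> k; apply: (addrI (phi k 0)); rewrite -phiD !addr0.
have thetaD : forall x y, theta (x + y) = theta x + theta y.
  move=> x y; rewrite /theta -big_split; apply: eq_bigr => j _; by rewrite phiD rmorphD mulrDl.
have thetaZ : forall b x, theta (b *: x) = f b * theta x.
  move=> b x; rewrite /theta mulr_sumr; apply: eq_bigr => j _; rewrite phiZ rmorphM; ring.
have theta0 : theta 0 = 0.
  by rewrite /theta big1 // => j _; rewrite phi0 rmorph0 mul0r.
have thetainj : injective theta.
  move=> x y Exy; rewrite (phiE x) (phiE y); apply: eq_bigr => k _.
  have : f (phi k x) = f (phi k y) by rewrite -!key Exy.
  by move/finj => ->.
pose L := fun z => exists m, z = theta m.
pose L2 := fun z => exists cc : 'I_n -> A, z = \sum_(k < n) f (cc k) * v k.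
have L2v : forall i, L2 (v i).
  move=> i; exists (fun k => if k == i then 1 else 0).
  rewrite (bigD1 i) //= eqxx rmorph1 mul1r big1 ?addr0 // => k /negbTE ->.
  by rewrite rmorph0 mul0r.
exists L; split; last first.
  exists theta; split; first exact: thetaD.
  by split; first exact: thetaZ.
split.
  split; first by exists 0.
  split; first by move=> _ _ [x ->] [y ->]; exists (x + y).
  by move=> b _ [x ->]; exists (b *: x).
exists L2; split.
  split; first by exists (fun _ => 0); rewrite big1 // => k _; rewrite rmorph0 mul0r.
  split.
    move=> _ _ [cc ->] [cc' ->]; exists (fun k => cc k + cc' k).
    by rewrite -big_split; apply: eq_bigr => k _; rewrite rmorphD mulrDl.
  move=> b _ [cc ->]; exists (fun k => b * cc k).
  by rewrite mulr_sumr; apply: eq_bigr => k _; rewrite rmorphM mulrA.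
move=> z; split.
  move=> [m [xs [ys [Hs ->]]]]; apply: Aimg_sum => p.
  have [[x ->] [cc ->]] := Hs p.
  rewrite mulr_sumr; apply: Aimg_sum => k.
  rewrite mulrA [theta x * _]mulrC -mulrA key; apply: AimgM; by [exists (cc k)|exists (phi k x)].
move=> [b ->].
exists n, (fun i => theta (b *: mg i)), v; split.
  by move=> i; split; [exists (b *: mg i)|exact: L2v].
rewrite -[LHS]mulr1 -one mulr_sumr; apply: eq_bigr => i _; by rewrite thetaZ mulrA.
Qed.
End BSide.


Lemma part5 (A B : comPzRingType) (f : {rmorphism A -> B}) : injective f ->
  finitely_many_maximal_ideals B -> forall M : lmodType A, in_Pic M ->
  exists L, invertible f L /\ iso_to_sub f M L.
Proof.
move=> finj Hmax M [[n [mg Hfg]] [proj rk]].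
pose p (r : 'rV[A]_n) : M := \sum_(i < n) r 0 i *: mg i.
have pL : Alinear p.
  split.
    move=> x y; rewrite /p -big_split; apply: eq_bigr => i _; by rewrite mxE scalerDl.
  move=> a x; rewrite /p scaler_sumr; apply: eq_bigr => i _; by rewrite mxE scalerA.
have psurj : forall y, exists x, p x = y.
  move=> y; have [c ->] := Hfg y; exists (\row_i c i); rewrite /p.
  by apply: eq_bigr => i _; rewrite mxE.
have idL : Alinear (fun m : M => m) by [].
have [g [[gD gZ] pg]] := proj _ _ p (fun m : M => m) pL psurj idL.
pose phi i m := g m 0 i.
apply: (part5_core (phi := phi) finj) => //.
- by move=> k x y; rewrite /phi gD mxE.
- by move=> k a x; rewrite /phi gZ mxE.
- by move=> m; rewrite -{1}(pg m).
Qed.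


Theorem corollary4p6 (A B : comPzRingType) (f : {rmorphism A -> B}) :
  injective f ->
  finitely_many_maximal_ideals B ->
  [/\ (forall L : B -> Prop, invertible f L ->
         exists M : lmodType A, in_Pic M /\ iso_to_sub f M L),
      (forall L L' : B -> Prop, invertible f L -> invertible f L' ->
         same_class f L L' -> submod_iso f L L'),
      (forall L L' : B -> Prop, invertible f L -> invertible f L' ->
         mult_is_tensor f L L'),
      (forall L L' : B -> Prop, invertible f L -> invertible f L' ->
         submod_iso f L L' -> same_class f L L')
    & (forall M : lmodType A, in_Pic M ->
         exists L : B -> Prop, invertible f L /\ iso_to_sub f M L)].
Proof.
move=> finj Hmax; split.
- by move=> L iL; apply: (part1 finj).
- by move=> L L' iL iL'; apply: part2.
- by move=> L L' iL iL'; apply: (part3 finj).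
- by move=> L L' iL iL'; first [apply: (part4 finj) | apply: part4].
- exact: (part5 finj Hmax).
Qed.
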